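(* Let $N\ge2$. In the pair distinguishability task, Alice receives $x\in\{1,\dots,N\}$ uniformly at random, and Bob receives a pair $(x_1,x_2)$ with $1\le x_1<x_2\le N$ and the promise that Alice's input lies in $\{x_1,x_2\}$; Bob outputs $z\in\{1,\dots,N\}$ aiming to guess Alice's input. The success metric is $$\mathcal{S}(N)=\frac{1}{N(N-1)}\sum_{1\le x<x'\le N}\big[p(x|x,(x,x'))+p(x'|x',(x,x'))\big].$$ For a classical protocol with encoding $p_e(m|x)$ (messages $m$ from a finite set of arbitrary size) and decoding $p_d(z|y,m)$, so that $p(z|x,y)=\sum_mp_e(m|x)p_d(z|y,m)$, let $\mathcal{S}_C(N)$ be its success metric and $\mathcal{D}_C=\frac1N\sum_m\max_xp_e(m|x)$ its distinguishability. Then every classical protocol satisfies $$(N-1)\big(\mathcal{S}_C(N)-1\big)+1\le\mathcal{D}_C.$$ *)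

(* Defs.v *)
From mathcomp Require Import all_boot all_order all_algebra.
Set Implicit Arguments. Unset Strict Implicit. Unset Printing Implicit Defensive.
Import Order.TTheory GRing.Theory Num.Theory.
Local Open Scope ring_scope.

(* Alice's inputs x in {1..N} are modelled by 'I_N (i.e. {0..N-1}).
   Bob's input is a pair (x1,x2) with x1 < x2; decoding is given as a
   function of x1, x2 but only its values on pairs with x1 < x2 matter. *)

Definition is_encoding (R : numDomainType) (N : nat) (M : finType)
  (pe : 'I_N -> M -> R) : Prop :=
  (forall x m, 0 <= pe x m) /\ (forall x, \sum_(m : M) pe x m = 1).

Definition is_decoding (R : numDomainType) (N : nat) (M : finType)
  (pd : 'I_N -> 'I_N -> M -> 'I_N -> R) : Prop :=
  forall x1 x2 : 'I_N, (x1 < x2)%N ->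
    (forall m z, 0 <= pd x1 x2 m z) /\ (forall m, \sum_(z < N) pd x1 x2 m z = 1).

Definition behaviour (R : numDomainType) (N : nat) (M : finType)
  (pe : 'I_N -> M -> R) (pd : 'I_N -> 'I_N -> M -> 'I_N -> R)
  (z x x1 x2 : 'I_N) : R :=
  \sum_(m : M) pe x m * pd x1 x2 m z.

Definition success (R : numFieldType) (N : nat) (M : finType)
  (pe : 'I_N -> M -> R) (pd : 'I_N -> 'I_N -> M -> 'I_N -> R) : R :=
  (N%:R * (N%:R - 1))^-1 *
  \sum_(x < N) \sum_(x' < N | (x < x')%N)
     (behaviour pe pd x x x x' + behaviour pe pd x' x' x x').

Definition distinguishability (R : numFieldType) (N : nat) (M : finType)
  (pe : 'I_N -> M -> R) : R :=
  N%:R^-1 * \sum_(m : M) \big[Num.max/0]_(x < N) pe x m.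

(* Main.v *)
Require Import Defs.
From mathcomp Require Import all_boot all_order all_algebra.
From mathcomp Require Import ring lra.
Import Order.TTheory GRing.Theory Num.Theory.
Local Open Scope ring_scope.
Lemma sym_pairs (R : zmodType) N (g : 'I_N -> 'I_N -> R) :
  \sum_(x < N) \sum_(x' < N | (x < x')%N) (g x x' + g x' x) =
  \sum_(x < N) \sum_(x' < N | x' != x) g x x'.
Proof.
under eq_bigr => x _ do rewrite big_split /=.
rewrite big_split /=.
have E : \sum_(x < N) \sum_(x' < N | (x < x')%N) g x' x =
         \sum_(x < N) \sum_(x' < N | (x' < x)%N) g x x'.
  under eq_bigr => x _ do rewrite big_mkcond /=.
  by rewrite exchange_big; apply: eq_bigr => x _; rewrite [RHS]big_mkcond.
rewrite E -big_split; apply: eq_bigr => x _ /=.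
rewrite big_mkcond [X in _ + X]big_mkcond [RHS]big_mkcond -big_split.
apply: eq_bigr => y _ /=.
case: (ltngtP x y) => h.
- by rewrite addr0 neq_ltn h orbT.
- by rewrite add0r neq_ltn h.
- by rewrite addr0 (val_inj h) eqxx.
Qed.

Lemma pair_le (R : numDomainType) N (z : 'I_N -> R) (i j : 'I_N) :
  i != j -> (forall t, 0 <= z t) -> z i + z j <= \sum_t z t.
Proof.
move=> ij z0; rewrite (bigD1 i) //= (bigD1 j) /=; last by rewrite eq_sym.
by rewrite addrA lerDl sumr_ge0.
Qed.

Lemma const_sum (R : ringType) N (x : 'I_N) (c : R) :
  \sum_(x' < N | x' != x) c = c *+ N - c.
Proof.
have H : \sum_(i < N) c = c *+ N by rewrite sumr_const card_ord.
by rewrite -H [in RHS](bigD1 x) //= addrAC subrr add0r.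
Qed.
Lemma per_m (R : realFieldType) N (a : 'I_N -> R) (al be : 'I_N -> 'I_N -> R) :
 (0 < N)%N -> (forall x, 0 <= a x) ->
 (forall x x' : 'I_N, (x < x')%N -> [/\ 0 <= al x x', 0 <= be x x' & al x x' + be x x' <= 1]) ->
 \sum_(x < N) \sum_(x' < N | (x < x')%N) (a x * al x x' + a x' * be x x')
   <= \big[Num.max/0]_(x < N) a x + (N%:R - 2) * \sum_(x < N) a x.
Proof.
move=> N0 a0 H.
have [k _ Ak] : {k | k \in xpredT & \big[Num.max/0]_(x < N) a x = a k}.
  exact: (eq_bigmax (Ordinal N0)).
have ak : forall j, a j <= a k by move=> j; rewrite -Ak; exact: le_bigmax.
pose g (x x' : 'I_N) := a x - (x' == k)%:R * a x.
apply: (le_trans (y := \sum_(x < N) \sum_(x' < N | (x < x')%N) (g x x' + g x' x))).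
  apply: ler_sum => x _; apply: ler_sum => x' xx'.
  have [h1 h2 h3] := H _ _ xx'.
  have neq : x != x' by rewrite neq_ltn xx'.
  have ax := a0 x; have ax' := a0 x'; have akx := ak x; have akx' := ak x'.
  rewrite /g.
  case: (eqVneq x k) => [xk|xk]; case: (eqVneq x' k) => [x'k|x'k].
  - by move: neq; rewrite xk x'k eqxx.
  - rewrite mul0r mul1r subr0 subrr addr0.
    apply: (le_trans (y := a x * al x x' + a x * be x x')).
      by rewrite lerD2l ler_wpM2r // xk.
    by rewrite -mulrDr ler_piMr.
  - rewrite mul0r mul1r subr0 subrr add0r.
    apply: (le_trans (y := a x' * al x x' + a x' * be x x')).
      by rewrite lerD2r ler_wpM2r // x'k.
    by rewrite -mulrDr ler_piMr.
  - rewrite !mul0r !subr0.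
    apply: lerD; rewrite ler_piMr //; lra.
rewrite sym_pairs /g.
have inner : forall x : 'I_N, \sum_(x' < N | x' != x) (x' == k)%:R * a x = (x != k)%:R * a x.
  move=> x; case: (eqVneq x k) => [->|xk].
    by rewrite mul0r; apply: big1 => i ik; rewrite (negbTE ik) mul0r.
  rewrite (bigD1 k) /=; last by rewrite eq_sym xk.
  rewrite eqxx mul1r big1 ?addr0 // => i /andP[_ ik]; by rewrite (negbTE ik) mul0r.
under eq_bigr => x _ do rewrite sumrB const_sum inner.
have E2 : \sum_(x < N) (x != k)%:R * a x = \sum_(x < N) a x - a k.
  rewrite [in RHS](bigD1 k) //= [in LHS](bigD1 k) //= eqxx mul0r add0r addrAC subrr add0r.
  by apply: eq_bigr => i ik; rewrite ik mul1r.
rewrite !sumrB E2 Ak sumrMnl -mulr_natr.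
lra.
Qed.
Theorem theorem7 (R : realFieldType) (N : nat) (M : finType)
  (pe : 'I_N -> M -> R) (pd : 'I_N -> 'I_N -> M -> 'I_N -> R) :
  (2 <= N)%N -> is_encoding pe -> is_decoding pd ->
  (N%:R - 1) * (success pe pd - 1) + 1 <= distinguishability pe.
Proof.
move=> N2 [pe0 pe1] pdok.
have N0 : (0 < N)%N by apply: leq_trans N2.
have hN : 2 <= N%:R :> R by rewrite (ler_nat R 2 N).
rewrite /success /distinguishability.
set s := \sum_(x < N) _.
set d := \sum_(m : M) _.
have key : s <= d + (N%:R - 2) * N%:R.
  have -> : s = \sum_(m : M) \sum_(x < N) \sum_(x' < N | (x < x')%N)
       (pe x m * pd x x' m x + pe x' m * pd x x' m x').
    rewrite /s /behaviour.
    under eq_bigr => x _ do under eq_bigr => x' _ do rewrite -big_split /=.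
    under eq_bigr => x _ do rewrite exchange_big /=.
    by rewrite exchange_big.
  apply: (le_trans (y := \sum_(m : M) (\big[Num.max/0]_(x < N) pe x m +
                         (N%:R - 2) * \sum_(x < N) pe x m))).
    apply: ler_sum => m _; apply: per_m => // x x' xx'.
    have [h1 h2] := pdok x x' xx'.
    split => //; rewrite -(h2 m); apply: pair_le => //.
    by rewrite neq_ltn xx'.
  rewrite big_split /= -mulr_sumr exchange_big /=.
  rewrite [\sum_(j < N) _](eq_bigr (fun=> 1)); last by move=> j _; exact: pe1.
  by rewrite sumr_const card_ord -mulr_natr.
have -> : (N%:R - 1) * ((N%:R * (N%:R - 1))^-1 * s - 1) + 1 =
          N%:R^-1 * (s - (N%:R - 2) * N%:R) :> R.
  field; apply/andP; split; lra.
rewrite ler_wpM2l ?invr_ge0 ?ler0n //; lra.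
Qed.
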